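(* Let $\mathcal{M}$ be a matroid on $[n]$, $\ell$ an integer, and $\gamma$ an $\ell$-cover of $\mathcal{M}$. Let $F$ be a focal basis of $\gamma$ and let $G\in\mathcal{B}(\mathcal{M})$. Then: (1) For any $A\subseteq F-G$ and any $B\subseteq G-F$ such that $(F-A)\cup B\in\mathcal{B}(\mathcal{M})$, we have $\gamma(A)\leq\gamma(B)$, and if $A\subseteq\operatorname{supp}\gamma$ then $B\subseteq\operatorname{supp}\gamma$. (2) For any bijection $\sigma:F-G\to G-F$ such that $(F-i)\cup\sigma(i)\in\mathcal{B}(\mathcal{M})$ for every $i\in F-G$ (such a bijection always exists), we have $\gamma(i)\leq\gamma(\sigma(i))$ for all $i\in F-G$. Suppose moreover that $G$ is also a focal basis of $\gamma$. Then: (3) If $A,B$ are as in (1) and additionally $(G-B)\cup A\in\mathcal{B}(\mathcal{M})$, then $\gamma(A)=\gamma(B)$, and $A\subseteq\operatorname{supp}\gamma$ if and only if $B\subseteq\operatorname{supp}\gamma$. (4) For $\sigma$ as in (2), $\gamma(i)=\gamma(\sigma(i))$ for all $i\in F-G$.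
   Context: $\mathcal{B}(\mathcal{M})$ is the set of bases of $\mathcal{M}$. For $\gamma:[n]\to\mathbb{N}_0$ and $S\subseteq[n]$, $\gamma(S)=\sum_{i\in S}\gamma(i)$ and $\operatorname{supp}\gamma=\{i:\gamma(i)>0\}$. $\gamma$ is an $\ell$-cover of $\mathcal{M}$ if $\gamma(F)\geq\ell$ for every basis $F$. A basis $F$ is a focal basis of $\gamma$ if $\gamma(F)=\ell$. *)

(* Defs.v *)
From mathcomp Require Import all_boot all_order all_algebra.
Set Implicit Arguments. Unset Strict Implicit. Unset Printing Implicit Defensive.
Import GRing.Theory Num.Theory.

Definition basis_exchange (n : nat) (B : {set {set 'I_n}}) : Prop :=
  forall B1 B2, B1 \in B -> B2 \in B ->
    forall x, x \in B1 :\: B2 ->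
      exists2 y, y \in B2 :\: B1 & (B1 :\ x) :|: [set y] \in B.

Record matroid (n : nat) := Matroid {
  bases : {set {set 'I_n}};
  bases_nonempty : bases != set0;
  bases_exchange : basis_exchange bases }.

Definition wt (n : nat) (g : 'I_n -> nat) (S : {set 'I_n}) : nat :=
  \sum_(i in S) g i.

Definition supp (n : nat) (g : 'I_n -> nat) : {set 'I_n} := [set i | 0 < g i].

Definition is_cover (n : nat) (M : matroid n) (l : int) (g : 'I_n -> nat) : Prop :=
  forall F, F \in bases M -> (l <= Posz (wt g F))%R.

Definition focal (n : nat) (M : matroid n) (l : int) (g : 'I_n -> nat)
  (F : {set 'I_n}) : Prop :=
  F \in bases M /\ Posz (wt g F) = l.

Definition exch_bij (n : nat) (M : matroid n) (F G : {set 'I_n})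
  (sigma : 'I_n -> 'I_n) : Prop :=
  [/\ {in F :\: G &, injective sigma},
      sigma @: (F :\: G) = G :\: F &
      forall i, i \in F :\: G -> (F :\ i) :|: [set sigma i] \in bases M].

(* Main.v *)
Require Import Defs.
From mathcomp Require Import all_boot all_order all_algebra.
From mathcomp Require Import zify.
Set Implicit Arguments. Unset Strict Implicit. Unset Printing Implicit Defensive.

Lemma exch n (M : matroid n) B1 B2 x : B1 \in bases M -> B2 \in bases M ->
  x \in B1 :\: B2 -> exists2 y, y \in B2 :\: B1 & (B1 :\ x) :|: [set y] \in bases M.
Proof. by move=> h1 h2; apply: bases_exchange. Qed.

Lemma noproper n (M : matroid n) B1 B2 :
  B1 \in bases M -> B2 \in bases M -> B1 \subset B2 -> B1 = B2.
Proof.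
move=> h1 h2 s; apply/eqP; rewrite eqEsubset s /=; apply/subsetP => z zB2.
apply/negPn/negP => zB1.
have zD : z \in B2 :\: B1 by rewrite inE zB2 andbT.
have [y] := exch h2 h1 zD.
by rewrite inE => /andP[/negP yB2 /(subsetP s)].
Qed.

Lemma card_swap n (B : {set 'I_n}) x y : x \in B -> y \notin B ->
  #|B :\ x :|: [set y]| = #|B|.
Proof.
move=> xB yB; rewrite setUC cardsU1 (cardsD1 x B) xB.
by rewrite inE (negbTE yB) andbF.
Qed.

Lemma bases_card n (M : matroid n) k : forall B1 B2,
  B1 \in bases M -> B2 \in bases M -> #|B1 :\: B2| = k -> #|B1| = #|B2|.
Proof.
elim: k => [|k IH] B1 B2 h1 h2 hk.
  move/eqP: hk; rewrite cards_eq0 setD_eq0 => s.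
  by rewrite (noproper h1 h2 s).
have: B1 :\: B2 != set0 by rewrite -card_gt0 hk.
case/set0Pn => x xD.
have [y yD hb] := exch h1 h2 xD.
move: (xD) (yD); rewrite !inE => /andP[xB2 xB1] /andP[yB1 yB2].
rewrite -(card_swap xB1 yB1); apply: IH => //.
have -> : (B1 :\ x :|: [set y]) :\: B2 = (B1 :\: B2) :\ x.
  apply/setP => z; rewrite !inE; case: (z =P y) => [->|_]; first by rewrite yB2 /= andbF.
  by rewrite /= orbF; case: (z == x); case: (z \in B2).
by move: hk; rewrite (cardsD1 x) xD; case.
Qed.

Lemma extend n (M : matroid n) (I B0 B : {set 'I_n}) :
  B0 \in bases M -> I \subset B0 -> B \in bases M ->
  exists B', [/\ B' \in bases M, I \subset B' & B' \subset I :|: B].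
Proof.
move=> h0 s0 hB.
have P0 : (fun C => (C \in bases M) && (I \subset C)) B0 by rewrite h0 s0.
case: (@arg_maxnP _ B0 (fun C => (C \in bases M) && (I \subset C)) (fun C => #|C :&: B|) P0) => B' /andP[hB' sB'] mx.
exists B'; split => //; apply/subsetP => z zB'; rewrite inE.
apply/negPn/negP; rewrite negb_or => /andP[zI zB].
have zD : z \in B' :\: B by rewrite inE zB' andbT.
have [y yD hb] := exch hB' hB zD.
move: yD; rewrite inE => /andP[yB' yB].
have := mx _ (_ : (fun C => (C \in bases M) && (I \subset C)) (B' :\ z :|: [set y])).
have -> : (B' :\ z :|: [set y]) :&: B = y |: (B' :&: B).
  apply/setP => w; rewrite !inE; case: (w =P y) => [->|_]; first by rewrite yB /= andbT orbT.
  by rewrite /= orbF; case: (w =P z) => [->|]; rewrite ?(negbTE zB) ?andbF.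
rewrite cardsU1 inE (negbTE yB') /= ltnn.
move=> H; have // : false by apply: H; rewrite hb /=; apply/subsetP => w wI;
  rewrite !inE (subsetP sB' _ wI) andbT; apply/orP; left; apply/eqP => e; subst w; rewrite wI in zI.
Qed.

Lemma bcard n (M : matroid n) B1 B2 :
  B1 \in bases M -> B2 \in bases M -> #|B1| = #|B2|.
Proof. by move=> h1 h2; apply: (bases_card h1 h2 (erefl _)). Qed.

Lemma sym_exch n (M : matroid n) (P Q : {set 'I_n}) x :
  P \in bases M -> Q \in bases M -> x \in P :\: Q ->
  exists2 y, y \in Q :\: P &
    (P :\ x :|: [set y] \in bases M) /\ (Q :\ y :|: [set x] \in bases M).
Proof.
move=> hP hQ xD; move: (xD); rewrite inE => /andP[xQ xP].
pose Z := [set y in Q | Q :\ y :|: [set x] \in bases M].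
have ZQ : Z \subset Q by apply/subsetP => z; rewrite inE => /andP[].
have claim : forall B, B \in bases M -> Z \subset B -> x \notin B.
  move=> B hB ZB; apply/negP => xB.
  have sxZ : x |: Z \subset B.
    by apply/subsetP => z; rewrite in_setU1; case/orP => [/eqP->//|]; apply: (subsetP ZB).
  have [B' [hB' s1 s2]] := extend hB sxZ hQ.
  have s3 : B' \subset x |: Q.
    apply/subsetP => z /(subsetP s2); rewrite in_setU in_setU1 => /orP [/orP [zx|zZ] | zQ];
      by rewrite in_setU1 ?zx ?(subsetP ZQ _ zZ) ?zQ ?orbT.
  have xB' : x \in B' by apply: (subsetP s1); rewrite !inE eqxx.
  have cB' := bcard hB' hQ.
  have : ~~ (x |: Q \subset B').
    apply/negP => sQB; have e : B' = x |: Q by apply/eqP; rewrite eqEsubset s3 sQB.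
    by move: cB'; rewrite e cardsU1 xQ add1n => /esym /n_Sn.
  case/subsetPn => y yxQ yB'.
  have yx : y != x by apply/negP => /eqP e; subst y; rewrite xB' in yB'.
  have yQ : y \in Q by move: yxQ; rewrite !inE (negbTE yx).
  have e : B' = Q :\ y :|: [set x].
    apply/eqP; rewrite eqEcard card_swap // ?cB' ?leqnn andbT.
    apply/subsetP => z zB'; rewrite !inE.
    have := subsetP s3 z zB'; rewrite !inE.
    case: (z =P x) => [_ _|_ /= zQ]; first by rewrite orbT.
    rewrite orbF zQ andbT; apply/negP => /eqP e; subst z; by rewrite zB' in yB'.
  have yZ : y \in Z by rewrite inE yQ -e hB'.
  by have := subsetP s1 y; rewrite in_setU1 yZ orbT (negbTE yB') => /(_ isT).
have [B' [hB' s1 s2]] := extend hQ ZQ hP.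
have xB' := claim _ hB' s1.
have [B'' [hB'' s4 s5]] := extend (I := P :\ x) hP (subD1set P x) hB'.
have : ~~ (B'' \subset P).
  apply/negP => sP; have e := noproper hB'' hP sP.
  have xB'' : x \in B'' by rewrite e.
  by have := subsetP s5 x xB''; rewrite !inE eqxx (negbTE xB').
case/subsetPn => y yB'' yP.
have yB' : y \in B' by have := subsetP s5 y yB''; rewrite !inE (negbTE yP) andbF.
have yZ : y \in Z by have := subsetP s2 y yB'; rewrite inE (negbTE yP) orbF.
move: yZ; rewrite inE => /andP[yQ hy].
exists y; first by rewrite inE yP yQ.
split => //.
have e : P :\ x :|: [set y] = B''.
  apply/eqP; rewrite eqEcard card_swap // (bcard hB'' hP) leqnn andbT.
  by rewrite subUset s4 sub1set.
by rewrite e.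
Qed.

Lemma bij_exists n (M : matroid n) (F : {set 'I_n}) k : F \in bases M ->
  forall G, G \in bases M -> #|F :\: G| = k -> exists sigma, exch_bij M F G sigma.
Proof.
move=> hF; elim: k => [|k IH] G hG hk.
  move/eqP: hk; rewrite cards_eq0 setD_eq0 => s.
  have e := noproper hF hG s; subst G.
  exists id; split; first by move=> i j; rewrite setDv inE.
    by rewrite setDv imset0.
  by move=> i; rewrite setDv inE.
have: F :\: G != set0 by rewrite -card_gt0 hk.
case/set0Pn => x xD.
have [y yD [h1 h2]] := sym_exch hF hG xD.
move: (xD) (yD); rewrite !inE => /andP[xG xF] /andP[yF yG].
set G' := G :\ y :|: [set x].
have e1 : F :\: G' = (F :\: G) :\ x.
  apply/setP => z; rewrite !inE; case: (z =P x) => [->|_]; first by rewrite ?eqxx ?orbT ?andbF.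
  case: (z =P y) => [->|_]; first by rewrite (negbTE yF) !andbF.
  by rewrite /= ?orbF.
have e2 : G' :\: F = (G :\: F) :\ y.
  apply/setP => z; rewrite !inE; case: (z =P x) => [->|_]; first by rewrite ?eqxx xF /= ?orbT !andbF.
  by case: (z =P y) => [->|_] /=; rewrite ?andbF ?orbF.
have [s []] : exists sigma, exch_bij M F G' sigma.
  apply: IH => //; rewrite e1; move: hk; rewrite (cardsD1 x) xD add1n; by case.
move=> sinj sim sb.
exists (fun i => if i == x then y else s i); split.
- move=> i j hi hj /=.
  have sG : forall w, w \in F :\: G -> w != x -> s w \in (G :\: F) :\ y.
    move=> w hw wx; rewrite -e2 -sim; apply: imset_f; rewrite e1 !inE wx /=.
    by move: hw; rewrite inE.
  case: (i =P x) => [->|ix]; case: (j =P x) => [->|jx] //.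
  + move=> ey; have := sG j hj (introN eqP jx); rewrite -ey !inE eqxx //.
  + move=> ey; have := sG i hi (introN eqP ix); rewrite ey !inE eqxx //.
  + apply: sinj; rewrite e1 !inE ?(introN eqP ix) ?(introN eqP jx) /=.
      by move: hi; rewrite inE.
    by move: hj; rewrite inE.
- have -> : F :\: G = x |: (F :\: G') by rewrite e1 setD1K.
  rewrite imsetU1 eqxx.
  rewrite (eq_in_imset (g := s)); last first.
    by move=> i; rewrite e1 !inE => /andP[/negbTE -> _].
  by rewrite sim e2 setD1K.
- move=> i hi; case: (i =P x) => [->|ix]; first by [].
  by apply: sb; rewrite e1 !inE (introN eqP ix) /=; move: hi; rewrite inE.
Qed.

Lemma wt_exch n (g : 'I_n -> nat) (F A B : {set 'I_n}) :
  A \subset F -> (forall b, b \in B -> b \notin F) ->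
  wt g ((F :\: A) :|: B) + wt g A = wt g F + wt g B.
Proof.
move=> sA hB; rewrite /wt.
rewrite (@big_setID _ _ _ _ ((F:\:A):|:B) B) (@big_setID _ _ _ _ F A) /=.
rewrite (setIidPr sA) (setIidPr (subsetUr _ _)).
have -> : ((F:\:A):|:B) :\: B = F:\:A.
  apply/setP => z; rewrite !inE; case zB: (z \in B) => /=; last by rewrite orbF.
  by rewrite (negbTE (hB _ zB)) andbF.
rewrite /=; lia.
Qed.

Lemma wt_le n (M : matroid n) l g (F A B : {set 'I_n}) :
  is_cover M l g -> focal M l g F -> A \subset F ->
  (forall b, b \in B -> b \notin F) -> (F :\: A) :|: B \in bases M ->
  wt g A <= wt g B.
Proof.
move=> hc [hF hl] sA hB hb.
have := hc _ hb; rewrite -hl lez_nat => h.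
have := wt_exch g sA hB; lia.
Qed.

Lemma wt1 n (g : 'I_n -> nat) i : wt g [set i] = g i.
Proof. by rewrite /wt big_set1. Qed.

Lemma supp_le n (M : matroid n) l g (F A B : {set 'I_n}) :
  is_cover M l g -> focal M l g F -> A \subset F ->
  (forall b, b \in B -> b \notin F) -> (F :\: A) :|: B \in bases M ->
  A \subset supp g -> B \subset supp g.
Proof.
move=> hc hf sA hB hb sAs; apply/subsetP => b bB; rewrite inE lt0n.
apply/negP => /eqP gb0.
have bD : b \in ((F :\: A) :|: B) :\: F by rewrite !inE bB orbT andbT hB.
have [a aD [_ h2]] := sym_exch hb hf.1 bD.
move: aD; rewrite !inE negb_or => /andP[/andP[aFA aB] aF].
have aA : a \in A by move: aFA; rewrite negb_and aF orbF negbK.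
have := wt_le hc hf (A := [set a]) (B := [set b]).
rewrite !wt1 gb0 leqn0 sub1set => /(_ (subsetP sA a aA)).
have := subsetP sAs a aA; rewrite inE lt0n => /negbTE ->.
move=> H; have // : false; apply: H => //.
by move=> z; rewrite inE => /eqP ->; apply: hB.
Qed.

Lemma sub_notin n (F G B : {set 'I_n}) : B \subset G :\: F -> forall b, b \in B -> b \notin F.
Proof. by move=> s b /(subsetP s); rewrite inE => /andP[]. Qed.

Lemma sub_in n (F G A : {set 'I_n}) : A \subset F :\: G -> A \subset F.
Proof. by move=> s; apply: (subset_trans s); apply: subsetDl. Qed.

Lemma bij_le n (M : matroid n) l g (F G : {set 'I_n}) sigma :
  is_cover M l g -> focal M l g F -> exch_bij M F G sigma ->
  forall i, i \in F :\: G -> g i <= g (sigma i).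
Proof.
move=> hc hf [sinj sim sb] i hi.
have si : sigma i \in G :\: F by rewrite -sim; apply: imset_f.
rewrite -!wt1; apply: (wt_le hc hf _ _ (sb i hi)).
  by rewrite sub1set; move: hi; rewrite inE => /andP[].
by move=> b; rewrite inE => /eqP ->; move: si; rewrite inE => /andP[].
Qed.

Theorem lemma3p3 (n : nat) (M : matroid n) (l : int) (g : 'I_n -> nat)
  (F G : {set 'I_n}) :
  is_cover M l g -> focal M l g F -> G \in bases M ->
  (* (1) *)
  (forall A B : {set 'I_n}, A \subset F :\: G -> B \subset G :\: F ->
     (F :\: A) :|: B \in bases M ->
     (wt g A <= wt g B)%N /\ (A \subset supp g -> B \subset supp g)) /\
  (* (2): such a bijection exists, and every such bijection is nondecreasing *)
  ((exists sigma, exch_bij M F G sigma) /\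
   forall sigma, exch_bij M F G sigma ->
     forall i, i \in F :\: G -> (g i <= g (sigma i))%N) /\
  (focal M l g G ->
   (* (3) *)
   (forall A B : {set 'I_n}, A \subset F :\: G -> B \subset G :\: F ->
      (F :\: A) :|: B \in bases M -> (G :\: B) :|: A \in bases M ->
      wt g A = wt g B /\ (A \subset supp g <-> B \subset supp g)) /\
   (* (4) *)
   (forall sigma, exch_bij M F G sigma ->
      forall i, i \in F :\: G -> g i = g (sigma i))).
Proof.
move=> hc hf hG; split.
  move=> A B sA sB hb; split.
    exact: (wt_le hc hf (sub_in sA) (sub_notin sB) hb).
  exact: (supp_le hc hf (sub_in sA) (sub_notin sB) hb).
split.
  split; first exact: (@bij_exists n M F _ hf.1 G hG (erefl _)).
  by move=> sigma hs; apply: bij_le hc hf hs.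
move=> hg; split.
  move=> A B sA sB hb1 hb2.
  have sA' : A \subset F :\: G := sA.
  have sB' : B \subset G :\: F := sB.
  split.
    apply/eqP; rewrite eqn_leq.
    rewrite (wt_le hc hf (sub_in sA) (sub_notin sB) hb1).
    by rewrite (wt_le hc hg (sub_in sB) (sub_notin sA) hb2).
  split.
    exact: (supp_le hc hf (sub_in sA) (sub_notin sB) hb1).
  exact: (supp_le hc hg (sub_in sB) (sub_notin sA) hb2).
move=> sigma hs i hi.
have le := bij_le hc hf hs.
case: hs => sinj sim _.
have eF : wt g F = wt g G.
  by case: hf => _ e1; case: hg => _ e2; move: e1; rewrite -e2; case.
have eD : wt g (F :\: G) = wt g (G :\: F).
  move: eF; rewrite /wt (big_setID G) (@big_setID _ _ _ _ G F) setIC => /eqP; rewrite eqn_add2l => /eqP; exact.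
have eS : \sum_(j in F :\: G) g j = \sum_(j in F :\: G) g (sigma j).
  by rewrite -(big_imset _ sinj) sim.
move: eS; rewrite !(big_setD1 i hi) /=.
have h3 : \sum_(j in (F :\: G) :\ i) g j <= \sum_(j in (F :\: G) :\ i) g (sigma j).
  by apply: leq_sum => j; rewrite in_setD1 => /andP[_ hj]; apply: le.
have h1 := le i hi.
move: h3; set S1 := \sum_(j in F :\: G :\ i) g j; set S2 := \sum_(j in F :\: G :\ i) g (sigma j).
move=> h3 e; lia.
Qed.
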